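(* Let $h,v$ be permutations of $\Lambda=\{1,\dots,d\}$ such that $\langle h,v\rangle$ acts transitively on $\Lambda$. Then for every integer $M\ge0$ the graph $\Gamma^M$ is strongly connected.
   Context: $\Gamma^M=\Gamma^M_{h,v}$ is the directed multigraph with vertex set $\Lambda$ in which each vertex $\lambda$ has exactly two outgoing edges: one labeled $L$ to $vh^M(\lambda)$ and one labeled $R$ to $vh^{M+1}(\lambda)$. *)

(* Defs.v *)
From mathcomp Require Import all_boot all_fingroup.
Set Implicit Arguments. Unset Strict Implicit. Unset Printing Implicit Defensive.

(* Edge labels / multiplicities are irrelevant for strong connectivity. *)
Definition gamma_edge (d : nat) (h v : {perm 'I_d}) (M : nat) : rel 'I_d :=
  fun x y => (y == v ((h ^+ M)%g x)) || (y == v ((h ^+ M.+1)%g x)).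

Definition strongly_connected (T : finType) (e : rel T) : Prop :=
  forall x y : T, connect e x y.

(* Main.v *)
Require Import Defs.
From mathcomp Require Import all_boot all_fingroup.

Set Implicit Arguments. Unset Strict Implicit. Unset Printing Implicit Defensive.

Lemma perm_conn (T : finType) (e : rel T) (f : {perm T}) :
  (forall z, e z (f z)) -> forall z, connect e z (f^-1 z)%g.
Proof.
move=> ef z.
have sub: subrel (frel f) (connect e).
  by move=> a b /eqP <-; apply: connect1.
apply: (connect_sub sub).
rewrite fconnect_sym; last exact: perm_inj.
by apply: connect1; rewrite /= permKV.
Qed.

Lemma NP (T : finType) (S : {set T}) (a : {perm T}) :
  (forall z, z \in S -> a z \in S) -> (a \in 'N(S | 'P))%g.
Proof. move=> H; rewrite /astabs !inE /=; apply/subsetP => z Hz; rewrite inE; exact: H. Qed.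

Lemma NA (T : finType) (S : {set T}) (a : {perm T}) z :
  (a \in 'N(S | 'P))%g -> z \in S -> a z \in S.
Proof. by move=> /astabs_act H; rewrite -[a z]/(aperm z a) H. Qed.

Theorem lemma5p2 (d : nat) (h v : {perm 'I_d})
  (Htrans : [transitive <<[set h; v]>>, on [set: 'I_d] | 'P]) :
  forall M : nat, strongly_connected (gamma_edge h v M).
Proof.
move=> M x y.
set e := gamma_edge h v M.
set f : {perm 'I_d} := (h ^+ M * v)%g.
set S := [set z | connect e x z].
have ef : forall z, e z (f z).
  by move=> z; rewrite /e /gamma_edge /f permM eqxx.
have eg : forall z, e z (f (h z)).
  move=> z; rewrite /e /gamma_edge /f expgS !permM eqxx orbT //.
have Sf : forall z, z \in S -> f z \in S.
  move=> z; rewrite !inE => Hz; apply: connect_trans Hz (connect1 (ef z)).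
have Sfi : forall z, z \in S -> (f^-1)%g z \in S.
  move=> z; rewrite !inE => Hz; apply: connect_trans Hz (perm_conn ef z).
have Sg : forall z, z \in S -> f (h z) \in S.
  move=> z; rewrite !inE => Hz; apply: connect_trans Hz (connect1 (eg z)).
have hN : h \in 'N(S | 'P)%g.
  apply: NP => z Hz.
  by have := Sfi _ (Sg _ Hz); rewrite permK.
have vN : v \in 'N(S | 'P)%g.
  apply: NP => z Hz.
  have hiN : (h ^- M)%g \in 'N(S | 'P)%g by rewrite groupV groupX.
  have H1 := NA hiN Hz.
  by have := Sf _ H1; rewrite /f permM -(permM (h ^- M)%g) mulVg perm1.
have GN : (<<[set h; v]>> \subset 'N(S | 'P))%g.
  by rewrite gen_subG; apply/subsetP => b; rewrite in_set2 => /orP [] /eqP ->.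
have [p Hp Ey] := atransP2 Htrans (in_setT x) (in_setT y).
have := NA (subsetP GN p Hp) (_ : x \in S); rewrite Ey !inE; apply.
exact: connect0.
Qed.
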